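(* Let $A\in\mathbb{R}^{n\times n}$ and $B\in\mathbb{R}^{n\times m}$ with $(A,B)$ controllable. Let $E(\alpha)$ and $F(\alpha)$ be real polynomial matrices in the scalar indeterminate $\alpha\in\mathbb{R}$, of sizes $n\times n$ and $n\times m$ respectively, with $E(0)=0$ and $F(0)=0$. Then there exists $\bar\alpha>0$ such that $(A+E(\alpha),B+F(\alpha))$ is controllable for all $\alpha\in\mathbb{R}$ with $|\alpha|\ge\bar\alpha$.
   Context: A pair $(A,B)$ is controllable if $\operatorname{rank}[B\ AB\ \cdots\ A^{n-1}B]=n$. *)

(* Defs.v *)
From HB Require Import structures.
From mathcomp Require Import all_boot all_order all_algebra.
From mathcomp Require Import reals.
Set Implicit Arguments. Unset Strict Implicit. Unset Printing Implicit Defensive.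
Import Order.TTheory GRing.Theory Num.Theory.
Local Open Scope ring_scope.

Definition ctrb_mx {F : fieldType} {n m : nat} (A : 'M[F]_n) (B : 'M[F]_(n, m))
  : 'M[F]_(n, \sum_(k < n) m) :=
  \mxrow_(k < n) (A ^+ k *m B).

Definition controllable {F : fieldType} {n m : nat} (A : 'M[F]_n) (B : 'M[F]_(n, m)) : Prop :=
  \rank (ctrb_mx A B) = n.

Definition peval_mx {F : fieldType} {p q : nat} (P : 'M[{poly F}]_(p, q)) (a : F)
  : 'M[F]_(p, q) := map_mx (fun c => c.[a]) P.

(* Main.v *)
Require Import Defs.
From HB Require Import structures.
From mathcomp Require Import all_boot all_order all_algebra.
From mathcomp Require Import reals.
From Stdlib Require Import Classical.
From mathcomp Require Import zify.
Import Order.TTheory GRing.Theory Num.Theory.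
Local Open Scope ring_scope.

Lemma map_mxrow_h (aT rT : Type) (q m : nat) (qq : 'I_q -> nat)
  (f : aT -> rT) (B : forall j : 'I_q, 'M[aT]_(m, qq j)) :
  map_mx f (\mxrow_j B j) = \mxrow_j map_mx f (B j).
Proof.
apply/matrixP => i j.
have e : forall T (M : 'M[T]_(m, \sum_j qq j)), M i j = col j M i 0 by move=> T M; rewrite mxE.
rewrite e [RHS]e !col_mxrow !mxE //.
Qed.

Lemma ev_nonzero (R : realType) (p : {poly R}) : p != 0 ->
  exists b : R, 0 < b /\ forall a, b <= `|a| -> p.[a] != 0.
Proof.
suff H : forall k (p : {poly R}), (size p <= k)%N -> p != 0 ->
  exists b : R, 0 < b /\ forall a, b <= `|a| -> p.[a] != 0 by exact: H.
elim=> [|k IH] {}p.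
  by rewrite leqn0 size_poly_eq0 => /eqP ->; rewrite eqxx.
move=> hs hp.
case: (classic (exists r, root p r)) => [[r hr]|nr].
  have /factor_theorem [q eq] := hr.
  have hq : q != 0 by apply: contraNneq hp => hq0; rewrite eq hq0 mul0r.
  have sq : (size q <= k)%N.
    move: hs; rewrite eq size_Mmonic ?monicXsubC // size_XsubC.
    move=> h; have h2 : ((size q + 2).-1 <= k.+1)%N := h; lia.

  have [b [b0 hb]] := IH q sq hq.
  exists (Num.max b (`|r| + 1)); split; first by rewrite lt_max b0.
  move=> a; rewrite ge_max => /andP [h1 h2].
  rewrite eq hornerM hornerXsubC mulf_neq0 ?hb //.
  rewrite subr_eq0; apply/eqP => ar; move: h2; rewrite ar.
  by rewrite leNgt ltrDl ltr01.
exists 1; split => // a _.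
by apply/negP => h; apply: nr; exists a.
Qed.

Lemma map_mxX_h (aR rR : comNzRingType) (f : {rmorphism aR -> rR}) n (M : 'M[aR]_n) k :
  map_mx f (M ^+ k) = (map_mx f M) ^+ k.
Proof.
elim: k => [|k IH]; first by rewrite !expr0 map_mx1.
by rewrite !exprS map_mxM IH.
Qed.

Lemma peval_h (R : realType) p q (P : 'M[{poly R}]_(p, q)) a :
  peval_mx P a = map_mx (horner_eval a) P.
Proof. by apply/matrixP => i j; rewrite !mxE. Qed.

Lemma mapC_h (R : realType) p q (P : 'M[R]_(p, q)) a :
  map_mx (horner_eval a) (map_mx polyC P) = P.
Proof. by apply/matrixP => i j; rewrite !mxE horner_evalE hornerC. Qed.

Theorem lemma3 (R : realType) (n m : nat)
  (A : 'M[R]_n) (B : 'M[R]_(n, m))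
  (E : 'M[{poly R}]_n) (F : 'M[{poly R}]_(n, m)) :
  controllable A B ->
  peval_mx E 0 = 0 ->
  peval_mx F 0 = 0 ->
  exists abar : R, 0 < abar /\
    forall alpha : R, abar <= `|alpha| ->
      controllable (A + peval_mx E alpha) (B + peval_mx F alpha).
Proof.
move=> hc hE hF.
have /row_freeP [D hD] : row_free (ctrb_mx A B) by rewrite /row_free hc.
pose Ap := map_mx polyC A + E.
pose Bp := map_mx polyC B + F.
pose Q := \mxrow_(k < n) (Ap ^+ k *m Bp).
have ev : forall a, map_mx (horner_eval a) Q = ctrb_mx (A + peval_mx E a) (B + peval_mx F a).
  move=> a; rewrite /Q /ctrb_mx map_mxrow_h; apply: eq_mxrow => k.
  by rewrite map_mxM map_mxX_h !map_mxD !mapC_h -!peval_h.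
pose p := \det (Q *m map_mx polyC D).
have hp : forall a, p.[a] = \det (ctrb_mx (A + peval_mx E a) (B + peval_mx F a) *m D).
  by move=> a; rewrite -horner_evalE -det_map_mx map_mxM ev mapC_h.
have p0 : p != 0.
  apply/eqP => h0; have := hp 0; rewrite h0 horner0 hE hF !addr0 hD det1.
  by move/eqP; rewrite eq_sym oner_eq0.
have [b [b0 hb]] := @ev_nonzero R p p0.
exists b; split => // a ha.
have := hb a ha; rewrite hp => hdet.
rewrite /controllable; apply/eqP; rewrite eqn_leq rank_leq_row /=.
have hu : ctrb_mx (A + peval_mx E a) (B + peval_mx F a) *m D \in unitmx.
  by rewrite unitmxE unitfE.
by rewrite -{1}(mxrank_unit hu) mxrankM_maxl.
Qed.
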